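(* Let $(C^\bullet,\mathrm d)$ be a $\mathbb Z$-graded cochain complex of vector spaces and let $L:C^\bullet\to C^{\bullet+s}$ be a linear map of degree $s$ (for some integer $s$) which is a chain map up to sign, i.e. $\mathrm dL=\epsilon L\mathrm d$ for a fixed $\epsilon\in\{1,-1\}$. Then $\ker L$ is a subcomplex, and the following are equivalent: (i) for every $\alpha\in C^\bullet$, $\alpha\in\ker\mathrm d\cap\operatorname{im}L$ if and only if $\alpha\in\operatorname{im}(\mathrm dL)$; (ii) the map $H((\ker L)^\bullet,\mathrm d)\to H(C^\bullet,\mathrm d)$ induced by inclusion is an isomorphism in every degree. *)

(* Defs.v *)
From HB Require Import structures.
From mathcomp Require Import all_boot all_order all_algebra.
Set Implicit Arguments. Unset Strict Implicit. Unset Printing Implicit Defensive.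
Import Order.TTheory GRing.Theory Num.Theory.
Local Open Scope ring_scope.

Definition castC (K : fieldType) (C : int -> lmodType K) (m n : int)
  (e : m = n) (x : C m) : C n :=
  eq_rect m (fun k => (C k : Type)) x n e.

Section Complex.
Variables (K : fieldType) (C : int -> lmodType K) (s : int).
Variable d : forall n : int, {linear C n -> C (n + 1)}.
Variable L : forall n : int, {linear C n -> C (n + s)}.

Definition commutes_up_to (eps : K) : Prop :=
  forall (n : int) (x : C n),
    d (n + s) (L n x) = eps *: castC (addrAC n 1 s) (L (n + 1) (d n x)).

Definition kerL_subcomplex : Prop :=
  forall (n : int) (x : C n), L n x = 0 -> L (n + 1) (d n x) = 0.

(* (i), in degree n+s+1 (n ranging over all of Z covers every degree):
   alpha in ker d /\ im L  <->  alpha in im (d L). *)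
Definition cond_i : Prop :=
  forall (n : int) (alpha : C (n + s + 1)),
    (d (n + s + 1) alpha = 0 /\
       exists x : C (n + 1), castC (addrAC n 1 s) (L (n + 1) x) = alpha)
    <-> exists y : C n, d (n + s) (L n y) = alpha.

(* The map H^(n+1)(ker L, d) -> H^(n+1)(C, d) induced by inclusion is injective:
   a cocycle of ker L that is a coboundary in C is a coboundary in ker L. *)
Definition induced_injective : Prop :=
  forall (n : int) (z : C (n + 1)),
    L (n + 1) z = 0 -> d (n + 1) z = 0 ->
    (exists y : C n, d n y = z) ->
    exists y' : C n, L n y' = 0 /\ d n y' = z.

(* ... and surjective: every cocycle of C is cohomologous to a cocycle of ker L. *)
Definition induced_surjective : Prop :=
  forall (n : int) (z : C (n + 1)),
    d (n + 1) z = 0 ->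
    exists z' : C (n + 1), [/\ L (n + 1) z' = 0, d (n + 1) z' = 0 &
      exists y : C n, z - z' = d n y].

Definition cond_ii : Prop := induced_injective /\ induced_surjective.
End Complex.

(* Main.v *)
Require Import Defs.
From HB Require Import structures.
From mathcomp Require Import all_boot all_order all_algebra.
Import Order.TTheory GRing.Theory Num.Theory.
Local Open Scope ring_scope.

Section Casts.
Variables (K : fieldType) (C : int -> lmodType K).

Lemma castC_irr m n (e e' : m = n) (x : C m) : castC e x = castC e' x.
Proof. by rewrite (eq_irrelevance e e'). Qed.

Lemma castCK m n (e : m = n) (e' : n = m) (x : C m) : castC e' (castC e x) = x.
Proof. case: n / e e'  => e'; by rewrite (eq_axiomK e'). Qed.

Lemma castCZ m n (e : m = n) a (x : C m) : castC e (a *: x) = a *: castC e x.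
Proof. by case: n / e. Qed.

Lemma castCB m n (e : m = n) (x y : C m) : castC e (x - y) = castC e x - castC e y.
Proof. by case: n / e. Qed.

Lemma castC0 m n (e : m = n) : castC e (0 : C m) = 0.
Proof. by case: n / e. Qed.

Lemma castC_eq0 m n (e : m = n) (x : C m) : castC e x = 0 -> x = 0.
Proof. move=> h; have := congr1 (castC (esym e)) h; by rewrite castCK castC0. Qed.

Lemma castC_lin (k : int) (f : forall n, {linear C n -> C (n + k)}) m n (e : m = n)
  (x : C m) : f n (castC e x) = castC (congr1 (fun j => j + k) e) (f m x).
Proof. by case: n / e. Qed.
End Casts.

Theorem theorem3p25 (K : fieldType) (C : int -> lmodType K)
  (d : forall n : int, {linear C n -> C (n + 1)})
  (hdd : forall (n : int) (x : C n), d (n + 1) (d n x) = 0)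
  (s : int) (L : forall n : int, {linear C n -> C (n + s)})
  (eps : K) (heps : eps = 1 \/ eps = -1)
  (hdL : commutes_up_to d L eps) :
  kerL_subcomplex d L /\ (cond_i d L <-> cond_ii d L).
Proof.
have ee : eps * eps = 1 by case: heps => ->; rewrite ?mulr1 ?mulrNN ?mulr1.
have e0 : eps != 0.
  apply/negP => /eqP e0; move: ee; rewrite e0 mul0r => /eqP; by rewrite eq_sym oner_eq0.
have hLd : forall n (x : C n), L (n + 1) (d n x)
    = castC (esym (addrAC n 1 s)) (eps *: d (n + s) (L n x)).
  move=> n x; rewrite hdL scalerA ee scale1r castCK //.
split.
  move=> n x Lx; have := hdL n x; rewrite Lx linear0 => /esym/eqP.
  rewrite scaler_eq0 (negbTE e0) /= => /eqP; exact: castC_eq0.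
split.
- move=> hi; split.
  + move=> n z Lz dz [y dy].
    have [m em] : exists m, n = m + 1 by exists (n - 1); rewrite subrK.
    subst n.
    case: (proj1 (hi m (castC (addrAC m 1 s) (L (m + 1) y)))).
      split; last by exists y.
      by rewrite castC_lin hdL dy Lz ?linear0 castC0 scaler0 castC0.
    move=> w hw; exists (y - eps *: d m w); split.
      by rewrite linearB linearZ /= hLd hw castCZ castCK scalerA ee scale1r subrr.
    by rewrite linearB linearZ /= hdd scaler0 subr0.
  + move=> n z dz.
    case: (proj1 (hi n (castC (addrAC n 1 s) (L (n + 1) z)))).
      split; last by exists z.
      by rewrite castC_lin hdL dz linear0 castC0 scaler0 castC0.
    move=> y hy; exists (z - eps *: d n y); split.
    * by rewrite linearB linearZ /= hLd hy castCZ castCK scalerA ee scale1r subrr.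
    * by rewrite linearB linearZ /= hdd scaler0 subr0 dz.
    * exists (eps *: y); by rewrite opprD addrA subrr add0r opprK linearZ.
- move=> [hinj hsurj] n alpha; split.
  + case=> [da [x hx]]; subst alpha.
    move: da; rewrite castC_lin => /castC_eq0; rewrite hdL => /eqP.
    rewrite scaler_eq0 (negbTE e0) /= => /eqP /castC_eq0 Ldx.
    have [y' [Ly' dy']] := hinj (n + 1) (d (n + 1) x) Ldx (hdd _ _) (ex_intro _ x erefl).
    case: (hsurj n (x - y')).
      by rewrite linearB /= dy' subrr.
    move=> z' [Lz' dz' [y hy]].
    exists (eps *: y); rewrite linearZ linearZ /= hdL scalerA ee scale1r -hy.
    by rewrite !linearB /= Ly' Lz' !subr0.
  + case=> y <-; split; first exact: hdd.
    by exists (eps *: d n y); rewrite linearZ /= castCZ hdL.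
Qed.
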